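(* Let $(V,Y,\mathbf{1})$ be a vertex operator algebra, $W$ a vector space and $Y_W:V\otimes W\to W((x))$ a linear map, written $u\otimes w\mapsto Y_W(u,x)w=\sum_{n\in\mathbb{Z}}u_nw\,x^{-n-1}$ (so $u_n=\mathrm{Res}_x x^nY_W(u,x)$). Let $u,v\in V$, $w\in W$ and $k,l\in\mathbb{Z}$ such that $v_nw=0$ for all $n\ge k$ and $u_nw=0$ for all $n\ge l$. Assume: (i) for all $p,q\in\mathbb{Z}$ with $q<k$, $$\mathrm{Res}_{x_0}\mathrm{Res}_{x_2}(x_0+x_2)^px_2^qY_W(u,x_0+x_2)Y_W(v,x_2)w=\mathrm{Res}_{x_0}\mathrm{Res}_{x_2}\,P_{p,q}(x_0,x_2)\,x_2^q(x_0+x_2)^lY_W(Y(u,x_0)v,x_2)w,$$ where $P_{p,q}(x_0,x_2)=\sum_{i=0}^{k-q-1}\binom{p-l}{i}x_0^{p-l-i}x_2^i$ (equivalently, $u_pv_qw=\sum_{i=0}^{k-q-1}\sum_{j=0}^{l}\binom{p-l}{i}\binom{l}{j}(u_{p-l-i+j}v)_{q+l+i-j}w$); (ii) for all $p,q\in\mathbb{Z}$ and all integers $i\ge k-q$, $$\mathrm{Res}_{x_0}\mathrm{Res}_{x_2}\,x_0^{p-l-i}x_2^{q+i}(x_0+x_2)^{l}\,Y_W(Y(u,x_0)v,x_2)w=0.$$ Then $$(x_0+x_2)^lY_W(u,x_0+x_2)Y_W(v,x_2)w=(x_0+x_2)^lY_W(Y(u,x_0)v,x_2)w.$$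
   Context: $Y(u,x)=\sum_n u_nx^{-n-1}$ denotes the vertex operator of $V$. Expressions $(x_0+x_2)^n$ (for any $n\in\mathbb{Z}$) and $Y_W(u,x_0+x_2)=\sum_n u_n(x_0+x_2)^{-n-1}$ are expanded in nonnegative powers of $x_2$. *)

(* Defs.v *)
From HB Require Import structures.
From mathcomp Require Import all_boot all_order all_algebra.
From Stdlib Require Import ClassicalEpsilon.
Set Implicit Arguments. Unset Strict Implicit. Unset Printing Implicit Defensive.
Import Order.TTheory GRing.Theory Num.Theory.
Local Open Scope ring_scope.

(* Generalized binomial coefficient binom(m, i) for m : int, i : nat.
   binom(n, i) = 'C(n, i) for n >= 0;
   binom(-(n+1), i) = (-1)^i 'C(n+i, i). *)
Definition binz (m : int) (i : nat) : int :=
  match m with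
  | Posz n => ('C(n, i))%:Z
  | Negz n => (-1) ^+ i * ('C(n + i, i))%:Z
  end.

(* Sum of a finitely supported family f : nat -> W (f j = 0 for j >= N);
   0 by convention if f is not finitely supported. The value does not
   depend on the chosen bound N. *)
Definition fsum (W : zmodType) (f : nat -> W) : W :=
  let P := fun N : nat => forall j, (N <= j)%N -> f j = 0 in
  if excluded_middle_informative (exists N, P N)
  then \sum_(j < epsilon (inhabits 0%N) P) f j
  else 0.

(* Formal series in x0, x2 with coefficients in W:
   F a b = coefficient of x0^a x2^b. *)
Definition series (W : Type) := int -> int -> W.

Definition mulmono (W : Type) (a b : int) (F : series W) : series W :=
  fun A B => F (A - a) (B - b).

(* Multiplication by (x0+x2)^m = sum_{i>=0} binom(m,i) x0^(m-i) x2^i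
   (expanded in nonnegative powers of x2). *)
Definition mulpow (W : zmodType) (m : int) (F : series W) : series W :=
  fun A B => fsum (fun i : nat => F (A - m + i%:Z) (B - i%:Z) *~ binz m i).

Definition Res2 (W : Type) (F : series W) : W := F (-1) (-1).

Definition mulP (W : zmodType) (k l p q : int) (F : series W) : series W :=
  fun A B => \sum_(i < `|k - q|%N | (i%:Z < k - q)%R)
               mulmono (p - l - i%:Z) i%:Z F A B *~ binz (p - l) i.

Section Ops.
Variables (V W : Type) (zW : zmodType).

(* Y_W(u, x0+x2) Y_W(v, x2) w, where
   Y_W(u,x0+x2) = sum_n u_n (x0+x2)^{-n-1}
               = sum_n sum_{j>=0} binom(-n-1,j) u_n x0^{-n-1-j} x2^j. *)
Definition YW_shift_comp (YW : V -> zW -> int -> zW) (u v : V) (w : zW)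
  : series zW :=
  fun a b => fsum (fun j : nat =>
     YW u (YW v w (j%:Z - 1 - b)) (-1 - a - j%:Z) *~ binz (a + j%:Z) j).

(* Y_W(Y(u,x0)v, x2) w : coefficient of x0^a x2^b is (u_{-a-1} v)_{-b-1} w. *)
Definition YW_iter (Y : V -> V -> int -> V) (YW : V -> zW -> int -> zW)
  (u v : V) (w : zW) : series zW :=
  fun a b => YW (Y u v (- a - 1)) w (- b - 1).
End Ops.

(* Vertex operator algebra (V, Y, 1) over a field K of characteristic 0 with
   conformal vector omega and central charge c, in components:
   Y u v n = u_n v, i.e. Y(u,x)v = sum_n u_n v x^{-n-1}. *)
Definition VirL (K : fieldType) (V : lmodType K) (Y : V -> V -> int -> V)
  (omega : V) (n : int) (v : V) : V := Y omega v (n + 1).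

Definition is_VOA (K : fieldType) (V : lmodType K) (Y : V -> V -> int -> V)
  (vac omega : V) (c : K) : Prop :=
  let L := VirL Y omega in
  [/\
      (forall (a : K) u1 u2 v n, Y (a *: u1 + u2) v n = a *: Y u1 v n + Y u2 v n),
      (forall (a : K) u v1 v2 n, Y u (a *: v1 + v2) n = a *: Y u v1 n + Y u v2 n),
      (forall u v, exists N : int, forall n, N <= n -> Y u v n = 0),
      (forall v n, Y vac v n = if n == -1 then v else 0)
      & ((forall u n, 0 <= n -> Y u vac n = 0) /\ (forall u, Y u vac (-1) = u))] /\
   [/\ (* Jacobi identity, in Borcherds component form *)
      (forall u v w (p q r : int),
         fsum (fun i : nat => Y (Y u v (r + i%:Z)) w (p + q - i%:Z) *~ binz p i)
         = fsum (fun i : nat =>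
             (Y u (Y v w (q + i%:Z)) (p + r - i%:Z)
              - Y v (Y u w (p + i%:Z)) (q + r - i%:Z) *~ ((-1) ^+ `|r|%N))
             *~ ((-1) ^+ i * binz r i))),
      (forall (m n : int) v,
         L m (L n v) - L n (L m v)
         = L (m + n) v *~ (m - n)
           + (if m + n == 0 then ((m ^+ 3 - m)%:~R / 12%:R * c) *: v else 0)),
      (* L(-1)-derivative property: Y(L(-1)u,x) = d/dx Y(u,x) *)
      (forall u v n, Y (L (-1) u) v n = Y u v (n - 1) *~ (- n))
      & L 0 omega = 2%:R *: omega] /\
   [/\ (* V = direct sum of L(0)-eigenspaces V_(n), n in Z *)
      (forall v, exists s : seq (int * V),
          v = \sum_(x <- s) x.2 /\ (forall x, x \in s -> L 0 x.2 = x.1%:~R *: x.2)),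
      (forall n : int, exists s : seq V, forall v, L 0 v = n%:~R *: v ->
          exists a : nat -> K, v = \sum_(i < size s) a i *: s`_i) &
      (exists N : int, forall (n : int) v, n < N -> L 0 v = n%:~R *: v -> v = 0)].

(* A linear map Y_W : V (x) W -> W((x)), in components YW u w n = u_n w. *)
Definition is_vertex_map (K : fieldType) (V W : lmodType K)
  (YW : V -> W -> int -> W) : Prop :=
  [/\ (forall (a : K) u1 u2 w n, YW (a *: u1 + u2) w n = a *: YW u1 w n + YW u2 w n),
      (forall (a : K) u w1 w2 n, YW u (a *: w1 + w2) n = a *: YW u w1 n + YW u w2 n) &
      (forall u w, exists N : int, forall n, N <= n -> YW u w n = 0)].

(* Main.v *)
Require Import Defs.
From HB Require Import structures.
From mathcomp Require Import all_boot all_order all_algebra.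
From mathcomp Require Import ring zify.
Import Order.TTheory GRing.Theory Num.Theory.
Local Open Scope ring_scope.

Lemma binz0 m : binz m 0 = 1.
Proof. by case: m => n //=; rewrite bin0 ?addn0 ?bin0 ?expr0 ?mul1r. Qed.

Lemma binz_0 i : binz 0 i = (i == 0%N)%:R.
Proof. by case: i. Qed.

Lemma binzS m i : binz (m + 1) i.+1 = binz m i.+1 + binz m i.
Proof.
case: m => n.
  by rewrite /= -PoszD addn1 /= binS PoszD.
case: n => [|n].
  rewrite /= subnn bin0n !add0n !binn !mulr1 exprS mulN1r addNr /=. by [].
have -> : Negz n.+1 + 1 = Negz n by rewrite !NegzE; ring.
rewrite /= addnS addSn binS exprS PoszD mulrDr.
have e : 'C((n + i.+1).+1, i.+1) = ('C(n+i,i.+1) + 'C(n+i,i) + 'C(n.+1+i,i))%N.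
  by rewrite binS !addnS binS addSn.
rewrite e !PoszD. ring.
Qed.

Definition Xc (m l : int) (s : nat) : int :=
  \sum_(i < s.+1) binz m i * binz l (s - i).

Lemma Xc0 m l : Xc m l 0 = 1.
Proof. by rewrite /Xc big_ord1 !binz0 mulr1. Qed.

Lemma XcS m l s : Xc m (l + 1) s.+1 = Xc m l s.+1 + Xc m l s.
Proof.
rewrite /Xc big_ord_recr /= subnn binz0.
rewrite [in RHS]big_ord_recr /= subnn binz0 addrAC; congr (_ + _).
rewrite -big_split /=; apply: eq_bigr => i _.
have hi : (i <= s)%N by rewrite -ltnS.
by rewrite subSn // binzS mulrDr.
Qed.



Lemma vdm m l s : Xc m l s = binz (m + l) s.
Proof.
elim/int_rect: l s => [|n IH|n IH] s.
- rewrite addr0 /Xc big_ord_recr /= subnn bin0 mulr1 big1 ?add0r // => i _.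
  rewrite bin0n; have -> : (s - i == 0)%N = false by rewrite subn_eq0 leqNgt ltn_ord.
  by rewrite mulr0.
- have -> : Posz n.+1 = Posz n + 1 by rewrite -addn1 PoszD.
  elim: s => [|s IHs]; first by rewrite Xc0 binz0.
  by rewrite XcS !IH addrA binzS.
- elim: s => [|s IHs]; first by rewrite Xc0 binz0.
  have e : - Posz n.+1 + 1 = - Posz n by rewrite -addn1 PoszD; ring.
  have := XcS m (- Posz n.+1) s; rewrite e IH IHs.
  have -> : m - Posz n = (m - Posz n.+1) + 1 by rewrite -e addrA.
  by rewrite binzS => /addIr.
Qed.

Lemma sum_trunc (W : zmodType) (g : nat -> W) N N' : (N <= N')%N ->
  (forall j, (N <= j)%N -> g j = 0) -> \sum_(j < N') g j = \sum_(j < N) g j.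
Proof.
move=> le h; rewrite (big_ord_widen N' g le) [RHS]big_mkcond /=.
apply: eq_bigr => i _; case: ifP => // /negbT; rewrite -leqNgt => /h ->.
by [].
Qed.

Lemma conv_gen (W : zmodType) (f : nat -> W) (c d : nat -> int) N :
  \sum_(i < N) \sum_(j < N - i) f (i + j)%N *~ (c i * d j)
  = \sum_(s < N) f s *~ (\sum_(i < s.+1) c i * d (s - i)%N).
Proof.
elim: N => [|N IH]; first by rewrite !big_ord0.
rewrite big_ord_recr /= subSnn big_ord1 addn0.
rewrite [RHS]big_ord_recr /= -IH mulrz_sumr big_ord_recr /= subnn.
rewrite addrA; congr (_ + _).
rewrite -big_split /=; apply: eq_bigr => i _.
have hi : (i <= N)%N by apply: ltnW.
by rewrite subSn // big_ord_recr /= subnKC.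
Qed.

Lemma conv (W : zmodType) (f : nat -> W) (m l : int) n :
  (forall t, (n < t)%N -> f t = 0) ->
  \sum_(i < n.+1) (\sum_(j < n.+1) f (i + j)%N *~ binz l j) *~ binz m i
  = \sum_(s < n.+1) f s *~ binz (m + l) s.
Proof.
move=> hf.
under [RHS]eq_bigr => s _ do rewrite -vdm /Xc.
rewrite -conv_gen; apply: eq_bigr => i _.
rewrite mulrz_suml (@sum_trunc _ (fun j => f (i + j)%N *~ binz l j *~ binz m i) (n.+1 - i)%N) ?leq_subr //.
  by apply: eq_bigr => j _; rewrite -mulrzA mulrC.
move=> j hj; rewrite hf ?mul0rz //.
by move: hj; rewrite leq_subLR; case: i => i /= hi; lia.
Qed.

From Stdlib Require Import ClassicalEpsilon FunctionalExtensionality.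

Lemma fsumE (W : zmodType) (f : nat -> W) N :
  (forall j, (N <= j)%N -> f j = 0) -> fsum f = \sum_(j < N) f j.
Proof.
move=> h; rewrite /fsum; case: excluded_middle_informative => [ex|nex]; last first.
  by exfalso; apply: nex; exists N.
set M := epsilon _ _.
have hM : forall j, (M <= j)%N -> f j = 0 by apply: (epsilon_spec _ _ ex).
rewrite -(@sum_trunc _ f M (maxn M N)) ?leq_maxl //.
by rewrite (@sum_trunc _ f N (maxn M N)) ?leq_maxr.
Qed.

Theorem theorem3p1 (K : fieldType) (hK : [pchar K] =i pred0)
  (V : lmodType K) (Y : V -> V -> int -> V) (vac omega : V) (c : K)
  (hV : is_VOA Y vac omega c)
  (W : lmodType K) (YW : V -> W -> int -> W) (hW : is_vertex_map YW)
  (u v : V) (w : W) (k l : int)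
  (hv : forall n : int, k <= n -> YW v w n = 0)
  (hu : forall n : int, l <= n -> YW u w n = 0)
  (hi : forall p q : int, q < k ->
     Res2 (mulpow p (mulmono 0 q (YW_shift_comp YW u v w)))
     = Res2 (mulP k l p q (mulmono 0 q (mulpow l (YW_iter Y YW u v w)))))
  (hii : forall (p q i : int), k - q <= i ->
     Res2 (mulmono (p - l - i) (q + i) (mulpow l (YW_iter Y YW u v w))) = 0) :
  mulpow l (YW_shift_comp YW u v w) = mulpow l (YW_iter Y YW u v w).
Proof.
case: hW => _ hW2 _.
have YW0 : forall x n, YW x 0 n = 0.
  move=> x n; have := hW2 1 x 0 0 n; rewrite !scale1r addr0.
  by move=> e; apply: (@addrI _ (YW x 0 n)); rewrite addr0 -e.
set F := YW_shift_comp YW u v w.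
set G := mulpow l (YW_iter Y YW u v w).
have Fz : forall a b, b < -k -> F a b = 0.
  move=> a b hb; rewrite /F /YW_shift_comp (@fsumE _ _ 0) ?big_ord0 // => j _.
  by rewrite hv ?YW0 ?mul0rz //; lia.
have FLz : forall A B, B < -k -> mulpow l F A B = 0.
  move=> A B hB; rewrite /mulpow (@fsumE _ _ 0) ?big_ord0 // => j _.
  by rewrite Fz ?mul0rz //; lia.
have Gz : forall A B, B < -k -> G A B = 0.
  move=> A B hB; have := hii (l - 1 - A) (-1 - B) 0; rewrite /Res2 /mulmono.
  have -> : -1 - (l - 1 - A - l - 0) = A by ring.
  have -> : -1 - (-1 - B + 0) = B by ring.
  by apply; lia.
pose H A B := mulpow l F A B - G A B.
have E : forall (m : int) (n : nat),
    \sum_(i < n.+1) H (-1 - m + Posz i) (-k + Posz n - Posz i) *~ binz m i = 0.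
  move=> m n.
  have := hi (m + l) (k - 1 - n%:Z) ltac:(lia).
  rewrite /Res2 /mulP /mulmono -/F -/G.
  have kq : k - (k - 1 - n%:Z) = (n.+1)%:Z by lia.
  rewrite kq absz_nat.
  pose f := fun t : nat => F (-1 - (m + l) + Posz t) (-k + Posz n - Posz t).
  have fz : forall t, (n < t)%N -> f t = 0 by move=> t ht; rewrite /f Fz //; lia.
  have L1 : mulpow (m + l) (fun A B : int => F (A - 0) (B - (k - 1 - Posz n))) (-1) (-1)
      = \sum_(s < n.+1) f s *~ binz (m + l) s.
    rewrite /mulpow (@fsumE _ _ n.+1).
      by apply: eq_bigr => s _; rewrite /f; congr (F _ _ *~ _); ring.
    by move=> j hj; rewrite Fz ?mul0rz //; lia.
  have R1 : \sum_(i < n.+1 | (Posz i < Posz n.+1)) G (-1 - (m + l - l - Posz i) - 0) (-1 - Posz i - (k - 1 - Posz n)) *~ binz (m + l - l) i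
      = \sum_(i < n.+1) G (-1 - m + Posz i) (-k + Posz n - Posz i) *~ binz m i.
    rewrite big_mkcond /=; apply: eq_bigr => i _; rewrite ltz_nat ltn_ord.
    by congr (G _ _ *~ binz _ _); ring.
  have M1 : \sum_(i < n.+1) mulpow l F (-1 - m + Posz i) (-k + Posz n - Posz i) *~ binz m i
      = \sum_(s < n.+1) f s *~ binz (m + l) s.
    rewrite -conv //; apply: eq_bigr => i _; congr (_ *~ _).
    rewrite /mulpow (@fsumE _ _ n.+1).
      apply: eq_bigr => j _; rewrite /f; congr (F _ _ *~ _); rewrite PoszD; ring.
    by move=> j hj; rewrite Fz ?mul0rz //; lia.
  rewrite L1 R1 => e.
  rewrite /H; under eq_bigr => i _ do rewrite mulrzBl.
  by rewrite sumrB M1 e subrr.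
have Hn : forall (n : nat) A, H A (-k + Posz n) = 0.
  elim/ltn_ind => n IH A.
  have := E (-1 - A) n; rewrite big_ord_recl big1 ?addr0.
    by rewrite binz0 mulr1z; congr (H _ _ = _); ring.
  move=> i _; rewrite /bump /=.
  have -> : -k + Posz n - Posz (1 + i) = -k + Posz (n - (1 + i)) by have := ltn_ord i; lia.
  by rewrite IH ?mul0rz //; have := ltn_ord i; lia.
apply: functional_extensionality => A; apply: functional_extensionality => B; apply/eqP; rewrite -subr_eq0; apply/eqP.
case: (ltP B (-k)) => hB; first by rewrite FLz ?Gz ?subrr.
have -> : B = -k + Posz (absz (B + k)) by lia.
exact: Hn.
Qed.
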